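(* For all integers $n,k\ge 0$ and every $x$ with $|x|<1$, \[ \sum_{d=k+1}^\infty d^n x^d = \sum_{i=0}^n \frac{e_{n,i}^k\, x^{k+i+1}}{(1-x)^{n+1}}. \]
   Context: For a fixed integer parameter $k$, the numbers $e^k_{n,i}$ are defined by $e^k_{0,0}=1$, $e^k_{n,i}=0$ whenever $i<0$ or $i>n$, and $e^k_{n,i}=(k+i+1)\,e^k_{n-1,i}+(n-k-i)\,e^k_{n-1,i-1}$ for all other integers $n,i$. *)

(* Defs.v *)
From HB Require Import structures.
From mathcomp Require Import all_boot all_order all_algebra.
From mathcomp Require Import all_classical all_reals all_analysis.
Set Implicit Arguments. Unset Strict Implicit. Unset Printing Implicit Defensive.
Import Order.TTheory GRing.Theory Num.Theory.
Local Open Scope ring_scope.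

Fixpoint ecoef (k n : nat) : nat -> int :=
  match n with
  | 0 => fun i => if i == 0%N then 1 else 0
  | m.+1 => fun i =>
      if (i <= m.+1)%N then
        (k + i + 1)%:Z * ecoef k m i
        + ((m.+1)%:Z - k%:Z - i%:Z) *
            (match i with 0 => 0 | j.+1 => ecoef k m j end)
      else 0
  end.

(* Main.v *)
From HB Require Import structures.
From mathcomp Require Import all_boot all_order all_algebra.
From mathcomp Require Import all_classical all_reals all_analysis.
From mathcomp Require Import ring lra.
Import Order.TTheory GRing.Theory Num.Theory.
Import numFieldNormedType.Exports.
Local Open Scope classical_set_scope.
Local Open Scope ring_scope.
Require Import Defs.
Section Lim.
Variable R : realType.

Lemma bern (h : R) (m : nat) : 0 <= h ->
  2 + 2 * m%:R * h + m%:R * (m%:R - 1) * h ^+ 2 <= 2 * (1 + h) ^+ m.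
Proof.
move=> h0; elim: m => [|m IH]; first by rewrite expr0 mulr1 (_ : 0%:R = 0 :> R) // !mulr0 !mul0r !addr0.
have hm : 0 <= m%:R * (m%:R - 1) :> R.
  case: m {IH} => [|m]; first by rewrite mul0r.
  by apply: mulr_ge0 => //; rewrite -natr1 addrK.
have e1 : 0 <= (1 + h) ^+ m by apply: exprn_ge0; lra.
have h3 : 0 <= m%:R * (m%:R - 1) * h ^+ 3 by apply: mulr_ge0 => //; apply: exprn_ge0.
have I2 := ler_wpM2l h0 IH.
rewrite -subr_ge0 in IH; rewrite -subr_ge0 in I2.
have E : 2 * ((1 + h) * (1 + h) ^+ m) - (2 + 2 * (m%:R + 1) * h + (m%:R + 1) * (m%:R + 1 - 1) * h ^+ 2)
   = (2 * (1 + h) ^+ m - (2 + 2 * m%:R * h + m%:R * (m%:R - 1) * h ^+ 2))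
     + (h * (2 * (1 + h) ^+ m) - h * (2 + 2 * m%:R * h + m%:R * (m%:R - 1) * h ^+ 2))
     + m%:R * (m%:R - 1) * h ^+ 3 by ring.
by rewrite [(1 + h) ^+ m.+1]exprS -(natr1 m) -subr_ge0 E; apply: addr_ge0 => //; apply: addr_ge0.
Qed.

Lemma key_ineq (h u m : R) : 0 < h -> 2 <= m ->
  2 + 2 * m * h + m * (m - 1) * h ^+ 2 <= 2 * u ->
  m * u^-1 <= 6 / h ^+ 2 * (m + 1)^-1.
Proof.
move=> hp m2 B.
have hh : 0 < h ^+ 2 by apply: exprn_gt0.
have mh : 0 <= m * h by apply: mulr_ge0; lra.
have K : 0 <= m * (m - 2) * h ^+ 2.
  by apply: mulr_ge0; [apply: mulr_ge0; lra | lra].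
have mm : 0 <= m * (m - 1) * h ^+ 2.
  by apply: mulr_ge0; [apply: mulr_ge0; lra | lra].
have up : 0 < u by lra.
rewrite -subr_ge0.
have -> : 6 / h ^+ 2 * (m + 1)^-1 - m * u^-1
   = (6 * u - m * (m + 1) * h ^+ 2) / (h ^+ 2 * (m + 1) * u).
  by field; rewrite ?gt_eqF //; lra.
apply: divr_ge0.
  have -> : 6 * u - m * (m + 1) * h ^+ 2
    = 3 * (2 * u - (2 + 2 * m * h + m * (m - 1) * h ^+ 2)) + 6 + 6 * (m * h)
      + 2 * (m * (m - 2) * h ^+ 2) by ring.
  lra.
by apply: mulr_ge0; [apply: mulr_ge0; lra | lra].
Qed.

Lemma lin_geo (y : R) : 0 <= y < 1 -> (fun m : nat => m%:R * y ^+ m) @ \oo --> 0.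
Proof.
case/andP => y0 y1.
have [->|yn0] := eqVneq y 0.
  apply: cvg_near_cst; near=> m.
  have H : (0 < m)%N by near: m; apply: nbhs_infty_ge.
  by rewrite expr0n (gtn_eqF H) mulr0.
Unshelve. 2: by end_near.
have yp : 0 < y by rewrite lt_def yn0.
set h := y^-1 - 1.
have hp : 0 < h by rewrite /h subr_gt0 invf_gt1.
have yh : y * (1 + h) = 1 by rewrite /h addrC subrK mulfV.
apply: (@squeeze_cvgr _ _ _ _ (fun=> 0) (fun m => (6 / h ^+ 2) * harmonic m)).
- near=> m.
  have m2 : (2 <= m)%N by near: m; apply: nbhs_infty_ge.
  apply/andP; split; first by apply: mulr_ge0 => //; apply: exprn_ge0; lra.
  have B := @bern h m (ltW hp).
  have u1 : y ^+ m * (1 + h) ^+ m = 1 by rewrite -exprMn yh expr1n.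
  have up : 0 < (1 + h) ^+ m by apply: exprn_gt0; lra.
  have m2' : 2 <= m%:R :> R by rewrite ler_nat.
  rewrite /harmonic /=.
  have -> : y ^+ m = ((1 + h) ^+ m)^-1.
    by apply: (mulIf (lt0r_neq0 up)); rewrite u1 mulVf // gt_eqF.
  rewrite -(natr1 m); exact: key_ineq.
- by apply: cvg_near_cst; apply: nearW.
- by rewrite -[0](mulr0 (6 / h ^+ 2)); apply: cvgMl_tmp; exact: cvg_harmonic.
Unshelve. all: by end_near.
Qed.

Lemma pow_geo (j : nat) (y : R) : 0 <= y < 1 ->
  (fun m : nat => m%:R ^+ j * y ^+ m) @ \oo --> 0.
Proof.
elim: j y => [|j IH] y /andP[y0 y1].
  under eq_fun do rewrite expr0 mul1r.
  by apply: cvg_expr; rewrite ger0_norm.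
set z := Num.sqrt y.
have z0 : 0 <= z by apply: sqrtr_ge0.
have zy : z ^+ 2 = y by apply: sqr_sqrtr.
have z1 : z < 1.
  rewrite ltNge; apply/negP => hz.
  have : 1 <= z ^+ 2 by rewrite expr2; nra.
  lra.
have zz : 0 <= z < 1 by rewrite z0 z1.
have C := cvgM (IH z zz) (@lin_geo z zz); rewrite mulr0 in C.
have E : (fun m : nat => m%:R ^+ j.+1 * y ^+ m)
  = (fun m : nat => (m%:R ^+ j * z ^+ m) * (m%:R * z ^+ m)).
  apply: funext => m.
  by rewrite -zy -exprM mulnC exprM exprS; ring.
rewrite E; exact: C.
Qed.

Lemma pow_geo_abs (j : nat) (x : R) : `|x| < 1 ->
  (fun m : nat => m%:R ^+ j * x ^+ m) @ \oo --> 0.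
Proof.
move=> x1.
have h : 0 <= `|x| < 1 by rewrite normr_ge0 x1.
have H := @pow_geo j `|x| h.
apply: (@squeeze_cvgr _ _ _ _ (fun m : nat => - (m%:R ^+ j * `|x| ^+ m))
   (fun m : nat => m%:R ^+ j * `|x| ^+ m)).
- apply: nearW => m.
  have -> : m%:R ^+ j * `|x| ^+ m = `| m%:R ^+ j * x ^+ m |.
    by rewrite normrM normrX normrX normr_nat.
  by rewrite -ler_norml.
- by rewrite -oppr0; apply: cvgN.
- exact: H.
Qed.

End Lim.
Section Poly.
Variables (R : realType) (k : nat).

Definition Pp n m : {poly R} := \sum_(k.+1 <= d < m) (d%:R ^+ n) *: 'X^d.
Definition Ep n : {poly R} := \sum_(i < n.+1) (ecoef k n i)%:~R *: 'X^(k + i + 1).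
Fixpoint Qp n j : {poly R} :=
  match n with
  | 0 => if j == 0%N then 1 else 0
  | n'.+1 => (match j with 0 => 0 | j'.+1 => (1 - 'X) * Qp n' j' end)
       + 'X * (1 - 'X) * (Qp n' j)^`() + n'.+1%:R * 'X * Qp n' j
  end.
Definition Fp n m : {poly R} := \sum_(j < n.+1) (m%:R ^+ j) *: Qp n j.

Lemma Qp_zero n j : (n < j)%N -> Qp n j = 0.
Proof.
elim: n j => [|n IH] [|j] //= H.
  by rewrite IH // IH ?(ltnW H) // deriv0 !mulr0 !addr0.
Qed.

Lemma ecoef_zero n i : (n < i)%N -> ecoef k n i = 0.
Proof.
case: n => [|n] /= H; first by case: i H.
by rewrite leqNgt H.
Qed.

Lemma derivS (I : Type) (r : seq I) (P : pred I) (F : I -> {poly R}) :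
  (\sum_(i <- r | P i) F i)^`() = \sum_(i <- r | P i) (F i)^`().
Proof. by apply: big_morph; [exact: derivD | exact: deriv0]. Qed.

Lemma Pp_S n m : Pp n.+1 m = 'X * (Pp n m)^`().
Proof.
rewrite /Pp derivS mulr_sumr; apply: eq_big_nat => d /andP[d1 _].
rewrite derivZ derivXn -scalerAr mulrnAr.
case: d d1 => // d _ /=.
by rewrite -exprS exprSr -scalerA scaler_nat.
Qed.

Lemma Ep_S n : Ep n.+1 = 'X * (1 - 'X) * (Ep n)^`() + n.+1%:R * 'X * Ep n.
Proof.
pose a i : R := (ecoef k n i)%:~R.
have LHS : Ep n.+1 = \sum_(i < n.+2) ((k + i + 1)%:R * a i) *: 'X^(k + i + 1)
   + \sum_(i < n.+2) ((n.+1%:R - k%:R - i%:R) * (match (i : nat) with 0 => 0 | j.+1 => a j end : R)) *: 'X^(k + i + 1).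
  rewrite -big_split /Ep; apply: eq_bigr => -[i /= Hi] _.
  rewrite ltnS in Hi; rewrite Hi -scalerDl; congr (_ *: _).
  rewrite /a; case: i Hi => [|i] Hi /=.
    by rewrite mulr0 addr0 mulr0 addr0 intrM; congr (_ * _).
  by rewrite intrD !intrM !intrB.
rewrite LHS big_ord_recr /= {2}/a ecoef_zero // mulr0 scale0r addr0.
rewrite [X in _ + X]big_ord_recl /= mulr0 scale0r add0r.
rewrite -big_split /Ep derivS !mulr_sumr -big_split; apply: eq_bigr => i _ /=. rewrite /bump /= add1n add0n derivZ derivXn /a !addn1 addnS /= !exprS -!mul_polyC; ring.
Qed.

Lemma Fp_S n m : Fp n.+1 m = m%:R * (1 - 'X) * Fp n m
   + 'X * (1 - 'X) * (Fp n m)^`() + n.+1%:R * 'X * Fp n m.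
Proof.
have -> : Fp n.+1 m = \sum_(j < n.+2) (m%:R ^+ j) *: (match (j : nat) with 0 => 0 | j'.+1 => (1 - 'X) * Qp n j' end)
   + \sum_(j < n.+2) (m%:R ^+ j) *: ('X * (1 - 'X) * (Qp n j)^`() + n.+1%:R * 'X * Qp n j).
  rewrite -big_split /Fp; apply: eq_bigr => -[j Hj] _ /=.
  by rewrite -scalerDr addrA.
rewrite big_ord_recl /= scaler0 add0r.
rewrite [X in _ + X]big_ord_recr /= Qp_zero // deriv0 !mulr0 addr0 scaler0 addr0.
rewrite /Fp derivS !mulr_sumr -[RHS]addrA -[in RHS]big_split; congr (_ + _).
  by apply: eq_bigr => j _; rewrite /bump /= add1n exprS -!mul_polyC; ring.
apply: eq_bigr => j _; rewrite derivZ -!mul_polyC; rewrite /=; ring.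
Qed.

Lemma deriv1 : (1 : {poly R})^`() = 0.
Proof. by rewrite -polyC1 derivC. Qed.

Lemma base_id m : (k < m)%N -> (1 - 'X) * Pp 0 m = 'X^(k.+1) - 'X^m.
Proof.
move=> /subnKC <-; elim: (m - k.+1)%N => [|t IH].
  by rewrite addn0 /Pp big_geq // mulr0 subrr.
rewrite /Pp addnS big_nat_recr ?leq_addr //= mulrDr.
rewrite /Pp in IH; rewrite IH expr0 scale1r [X in _ = _ - X]exprS; ring.
Qed.

Lemma main_id n m : (k < m)%N -> (1 - 'X) ^+ n.+1 * Pp n m = Ep n - 'X^m * Fp n m.
Proof.
move=> km; elim: n => [|n IH].
  rewrite expr1 base_id // /Ep /Fp !big_ord1 /= expr0 scale1r addn0 addn1.
  by rewrite scale1r mulr1.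
have D := congr1 deriv IH.
rewrite derivM deriv_exp derivB derivX deriv1 derivB derivM derivXn /= in D.
rewrite Pp_S Ep_S Fp_S.
rewrite [_ ^+ n.+1]exprS in IH D; rewrite [_ ^+ n.+2]exprS [_ ^+ n.+1]exprS.
case: m km IH D => // m' _ IH D.
rewrite [_ ^+ m'.+1]exprS in IH D *.
set W := (1 - 'X) ^+ n in IH D *.
set P := Pp n m'.+1 in IH D *.
set E := Ep n in IH D *.
set F := Fp n m'.+1 in IH D *.
set Y := 'X^m' in IH D *.
apply/eqP; rewrite -subr_eq0; apply/eqP.
move/eqP: IH; rewrite -subr_eq0 => /eqP IH.
move/eqP: D; rewrite -subr_eq0 => /eqP D.
have := congr2 (fun a b => 'X * (1 - 'X) * a + n.+1%:R * 'X * b) D IH.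
rewrite /= !mulr0 addr0 => <-; ring.
Qed.

End Poly.

Lemma cvg_sum0 (R : realType) (N : nat) (f : nat -> nat -> R) :
  (forall j, f j @ \oo --> 0) -> (fun m => \sum_(j < N) f j m) @ \oo --> 0.
Proof.
move=> H; elim: N => [|N IH].
  have -> : (fun m => \sum_(j < 0) f j m) = (fun=> 0) by apply: funext => m; rewrite big_ord0.
  by apply: cvg_near_cst; apply: nearW.
have -> : (fun m => \sum_(j < N.+1) f j m) = (fun m => \sum_(j < N) f j m + f N m).
  by apply: funext => m; rewrite big_ord_recr.
have := cvgD IH (H N); rewrite addr0; apply; exact: eventually_filter.
Qed.

Theorem corollary2p2 (R : realType) (n k : nat) (x : R) (hx : `|x| < 1) :
  (fun m : nat => \sum_(k.+1 <= d < m) (d%:R) ^+ n * x ^+ d) @ \oo -->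
  \sum_(i < n.+1) (ecoef k n i)%:~R * x ^+ (k + i + 1) / (1 - x) ^+ n.+1.
Proof.
set c := (1 - x) ^+ n.+1.
have x1 : x < 1 by apply: le_lt_trans (ler_norm x) hx.
have c0 : c != 0 by rewrite /c expf_neq0 // subr_eq0 gt_eqF.
have EE : \sum_(i < n.+1) (ecoef k n i)%:~R * x ^+ (k + i + 1) / c = (Ep R k n).[x] / c.
  by rewrite -mulr_suml /Ep horner_sum; congr (_ / _); apply: eq_bigr => i _; rewrite hornerZ hornerXn.
rewrite EE.
have T : forall m, (k < m)%N ->
  \sum_(k.+1 <= d < m) (d%:R) ^+ n * x ^+ d = (Ep R k n).[x] / c - (x ^+ m * (Fp R n m).[x]) / c.
  move=> m km.
  have := congr1 (fun p => p.[x]) (@main_id R k n m km).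
  rewrite /= !hornerE => H.
  have Pe : (Pp R k n m).[x] = \sum_(k.+1 <= d < m) (d%:R) ^+ n * x ^+ d.
    by rewrite /Pp horner_sum; apply: eq_bigr => d _; rewrite hornerZ hornerXn.
  rewrite -Pe; apply: (mulfI c0); rewrite -/c in H; rewrite H; field.
  exact: c0.
have Z : (fun m : nat => x ^+ m * (Fp R n m).[x]) @ \oo --> 0.
  have -> : (fun m : nat => x ^+ m * (Fp R n m).[x])
     = (fun m : nat => \sum_(j < n.+1) (m%:R ^+ j * x ^+ m) * (Qp R n j).[x]).
    apply: funext => m; rewrite /Fp horner_sum mulr_sumr; apply: eq_bigr => j _.
    by rewrite hornerZ; ring.
  apply: (@cvg_sum0 R n.+1 (fun j m => (m%:R ^+ j * x ^+ m) * (Qp R n j).[x])) => j.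
  have := cvgMr_tmp (b := (Qp R n j).[x]) (@pow_geo_abs R j x hx); rewrite mul0r.
  apply; exact: eventually_filter.
have L : (fun m : nat => (Ep R k n).[x] / c - x ^+ m * (Fp R n m).[x] / c) @ \oo
   --> (Ep R k n).[x] / c.
  have Z2 : (fun m : nat => x ^+ m * (Fp R n m).[x] / c) @ \oo --> 0.
    by rewrite -(mul0r c^-1); apply: cvgMr_tmp.
  have := cvgB (cvg_cst ((Ep R k n).[x] / c)) Z2; rewrite subr0.
  apply; exact: eventually_filter.
apply: cvg_trans L; apply: (@near_eq_cvg _ _ \oo eventually_filter).
near=> m; rewrite T //; near: m; exact: nbhs_infty_ge.
Unshelve. all: by end_near.
Qed.
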